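(* Let $k\geq 3$ and $t\geq 1$ be integers and let $G$ be a group of order $2^k(2t-1)$. Then $G$ is regular if and only if $G\cong H\times A$, where $A$ is an abelian group of order $2t-1$ and $H$ is a regular $2$-group of order $2^k$.
   Context: For a finite group $G$, $C_G(x)$ denotes the centralizer of $x\in G$. The non-centralizer graph $\Upsilon_G$ is the simple graph with vertex set $G$ in which two distinct vertices $x,y$ are adjacent if and only if $C_G(x)\neq C_G(y)$. A finite group $G$ is called regular if $\Upsilon_G$ is a regular graph (all vertices have the same degree). *)

(* Defs.v *)
From mathcomp Require Import all_boot all_fingroup all_solvable.
Set Implicit Arguments. Unset Strict Implicit. Unset Printing Implicit Defensive.
Local Open Scope group_scope.

(* Non-centralizer graph of a finite group G (vertex set G): distinct x, y
   are adjacent iff 'C_G[x] <> 'C_G[y]. *)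
Definition ncadj (gT : finGroupType) (G : {set gT}) (x y : gT) : bool :=
  (x != y) && ('C_G[x] != 'C_G[y]).

Definition ncdeg (gT : finGroupType) (G : {set gT}) (x : gT) : nat :=
  #|[set y in G | ncadj G x y]|.

Definition nc_regular (gT : finGroupType) (G : {set gT}) : Prop :=
  forall x y, x \in G -> y \in G -> ncdeg G x = ncdeg G y.

(* Main.v *)
Require Import Defs.
From mathcomp Require Import all_boot all_fingroup all_solvable.
From mathcomp Require Import zify.
Set Implicit Arguments. Unset Strict Implicit. Unset Printing Implicit Defensive.
Local Open Scope group_scope.

Definition reg' (gT : finGroupType) (G : {set gT}) : Prop :=
  forall x y, x \in G -> y \in G -> 'C_G[x] = 'C_G[y] -> x^-1 * y \in 'Z(G).

Section R.
Variable gT : finGroupType.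
Implicit Types G H K L : {group gT}.

Definition Ecl (G : {set gT}) x := [set y in G | 'C_G[x] == 'C_G[y]].

Lemma ncdegE G x : ncdeg G x = #|G| - #|Ecl G x|.
Proof.
rewrite /ncdeg.
have -> : [set y in G | ncadj G x y] = G :\: Ecl G x.
  apply/setP=> y; rewrite !inE /ncadj.
  case: (y \in G); rewrite ?andbF ?andbT //=.
  case: (x =P y) => [->|_]; first by rewrite eqxx.
  by [].
by rewrite cardsD (setIidPr _) // /Ecl; apply/subsetP=> y; rewrite inE => /andP[].
Qed.

Lemma cent1_mulZ G g z : z \in 'Z(G) -> 'C_G[g * z] = 'C_G[g].
Proof.
move=> /centerP [Gz cz]; apply/setP=> h; rewrite !in_setI.
case Gh: (h \in G) => //=.
have chz : commute h z by apply/commute_sym; apply: cz.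
apply/cent1P/cent1P => c.
  have -> : g = (g * z) * z^-1 by rewrite mulgK.
  by apply: commuteM => //; apply: commuteV.
by apply: commuteM.
Qed.

Lemma lcoset_sub_Ecl G x : x \in G -> x *: 'Z(G) \subset Ecl G x.
Proof.
move=> Gx; apply/subsetP=> y; rewrite mem_lcoset => Zy.
have -> : y = x * (x^-1 * y) by rewrite mulKVg.
rewrite inE cent1_mulZ // eqxx andbT groupM //.
by move/centerP: Zy => [].
Qed.

Lemma Ecl1 G : Ecl G 1 = 'Z(G).
Proof.
apply/setP=> y; rewrite inE.
apply/andP/centerP => [[Gy /eqP e]|[Gy cy]]; split => //.
  move=> h Gh; have : h \in 'C_G[1] by rewrite in_setI Gh; apply/cent1P; apply: commute1.
  by rewrite e => /setIP [_ /cent1P].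
apply/eqP/setP=> h; rewrite !in_setI; case Gh: (h \in G) => //=.
apply/idP/idP => _; apply/cent1P; last by apply: commute1.
by apply/commute_sym; apply: cy.
Qed.

Lemma nc_regularP G : nc_regular G <-> reg' G.
Proof.
split.
  move=> R x y Gx Gy e.
  have := R x 1 Gx (group1 G); rewrite !ncdegE Ecl1 => h.
  have hc : #|Ecl G x| = #|'Z(G)|.
    have h1 : #|Ecl G x| <= #|G| by apply: subset_leq_card; apply/subsetP=> u; rewrite inE => /andP[].
    have h2 : #|'Z(G)| <= #|G| by apply: subset_leq_card; apply: center_sub.
    have h3 : 0 < #|'Z(G)| by apply/card_gt0P; exists 1; apply: group1.
    lia.
  have /eqP ee : x *: 'Z(G) == Ecl G x.
    by rewrite eqEcard lcoset_sub_Ecl // card_lcoset hc leqnn.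
  have : y \in Ecl G x by rewrite inE Gy e eqxx.
  by rewrite -ee mem_lcoset.
move=> R x y Gx Gy; rewrite !ncdegE.
suff E u : u \in G -> Ecl G u = u *: 'Z(G) by rewrite !E // !card_lcoset.
move=> Gu; apply/eqP; rewrite eqEsubset lcoset_sub_Ecl // andbT.
by apply/subsetP=> v; rewrite inE mem_lcoset => /andP[Gv /eqP e]; apply: R.
Qed.

Lemma commute_mulZ (a l b : gT) : commute l b -> commute (a * l) b <-> commute a b.
Proof.
move=> clb; split => c; last by apply: commute_sym; apply: commuteM; apply: commute_sym.
have -> : a = (a * l) * l^-1 by rewrite mulgK.
apply: commute_sym; apply: commuteM; first by apply: commute_sym.
by apply: commuteV; apply: commute_sym.
Qed.

Lemma reg_dprod G K L : K \x L = G -> abelian L -> (reg' G <-> reg' K).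
Proof.
move=> dG aL.
have KL := dprodW dG.
have sKG : K \subset G by rewrite -KL mulG_subl.
have dZ := center_dprod dG; rewrite (center_idP aL) in dZ.
have ZKL := dprodW dZ.
have sZK : 'Z(K) \subset 'Z(G) by rewrite -ZKL mulG_subl.
have sLZ : L \subset 'Z(G) by rewrite -ZKL mulG_subr.
have memG : forall g, g \in G -> exists2 a, a \in K & exists2 l, l \in 'Z(G) & g = a * l.
  move=> g; rewrite -{1}KL => /mulsgP [a l Ka Ll ->].
  by exists a => //; exists l => //; apply: (subsetP sLZ).
have ZG : forall z g, z \in 'Z(G) -> g \in G -> commute z g.
  by move=> z g /centerP [_ cz] Gg; apply: cz.
split => R.
  move=> k1 k2 K1 K2 e.
  have G1 := subsetP sKG _ K1; have G2 := subsetP sKG _ K2.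
  have e' : 'C_G[k1] = 'C_G[k2].
    apply/setP=> g; rewrite !in_setI; case Gg: (g \in G) => //=.
    have [a Ka [l Zl ->]] := memG g Gg.
    have := congr1 (fun S : {set gT} => a \in S) e; rewrite !in_setI Ka /= => ea.
    apply/cent1P/cent1P => c.
      apply/(commute_mulZ a (ZG _ _ Zl G2)); apply/cent1P; rewrite -ea.
      by apply/cent1P; apply/(commute_mulZ a (ZG _ _ Zl G1)).
    apply/(commute_mulZ a (ZG _ _ Zl G1)); apply/cent1P; rewrite ea.
    by apply/cent1P; apply/(commute_mulZ a (ZG _ _ Zl G2)).
  have := R _ _ G1 G2 e'; move=> /centerP [_ cz].
  apply/centerP; split; first by rewrite groupM ?groupV.
  by move=> u Ku; apply: cz; apply: (subsetP sKG).
move=> x y Gx Gy e.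
have [a1 K1 [l1 Z1 ex]] := memG x Gx.
have [a2 K2 [l2 Z2 ey]] := memG y Gy.
rewrite ex ey !cent1_mulZ // in e.
have e' : 'C_K[a1] = 'C_K[a2].
  apply/setP=> u; rewrite !in_setI; case Ku: (u \in K) => //=.
  by have := congr1 (fun S : {set gT} => u \in S) e; rewrite !in_setI (subsetP sKG u Ku).
have := R _ _ K1 K2 e' => /(subsetP sZK) h.
have -> : x^-1 * y = l1^-1 * (a1^-1 * a2) * l2 by rewrite ex ey invMg !mulgA.
by apply: groupM; [apply: groupM => //; rewrite groupV|].
Qed.

Lemma reg_isog (hT : finGroupType) G (M : {group hT}) : G \isog M -> reg' M -> reg' G.
Proof.
rewrite isog_sym => /isogP [f injf fM] R x y.
rewrite -fM => /morphimP [a Da Ma ->] /morphimP [b Db Mb ->].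
rewrite -!injm_subcent1 // => /(injm_morphim_inj injf) e.
have := R a b Ma Mb (e (subsetIl _ _) (subsetIl _ _)) => Z.
rewrite -morphV // -morphM ?groupV // -injm_center //.
by apply: mem_morphim => //; rewrite groupM ?groupV.
Qed.
End R.

Lemma cent1Vg (gT : finGroupType) (G : {group gT}) (x : gT) : 'C_G[x^-1] = 'C_G[x].
Proof.
apply/setP=> g; rewrite !in_setI; case: (g \in G) => //=.
apply/cent1P/cent1P => c; first rewrite -(invgK x); exact: commuteV.
Qed.

Local Close Scope group_scope.

Theorem theorem2p13 (gT : finGroupType) (G : {group gT}) (k t : nat) :
  3 <= k -> 1 <= t -> #|G| = 2 ^ k * (2 * t - 1) ->
  (nc_regular G <->
   exists (hT aT : finGroupType) (H : {group hT}) (A : {group aT}),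
     [/\ [/\ pgroup 2 H, #|H| = 2 ^ k & nc_regular H],
         abelian A, #|A| = 2 * t - 1 &
         G \isog setX H A]).
Proof.
Local Open Scope group_scope.
move=> hk ht oG; split; last first.
  move=> [hT [aT [H [A [[_ _ RH] aA _ iso]]]]].
  apply/nc_regularP; apply: (reg_isog iso).
  apply/(reg_dprod (setX_dprod H A)).
    by rewrite -(isog_abelian (@isog_set1X hT aT A)).
  apply: (reg_isog (isog_symr (@isog_setX1 hT aT H))).
  by apply/nc_regularP.
move/nc_regularP => R.
have sq : forall x, x \in G -> x ^+ 2 \in 'Z(G).
  move=> x Gx; have := R x^-1 x (groupVr Gx) Gx (cent1Vg G x).
  by move=> h; rewrite invgK in h; rewrite expgS expg1.
have oddZ : forall x, x \in G -> odd #[x] -> x \in 'Z(G).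
  move=> x Gx ox.
  have -> : x = (x ^+ 2) ^+ (#[x]./2).+1.
    rewrite -expgM -{1}(expg1 x) -(mul1g (x ^+ 1)) -(expg_order x) -expgD.
    congr (x ^+ _); move: (odd_double_half #[x]); rewrite ox -muln2. lia.
  by rewrite groupX // sq.
have nilG : nilpotent G.
  rewrite -quotient_center_nil; apply: (@pgroup_nil _ 2).
  rewrite -pnat_exponent; apply: (@pnat_dvd _ 2); last exact: pnat_id.
  apply/exponentP => xb /morphimP [x Nx Gx ->].
  by rewrite -morphX //; apply: coset_id; apply: sq.
have dG := nilpotent_pcoreC 2 nilG.
have sAZ : 'O_2^'(G) \subset 'Z(G).
  apply/subsetP=> a Aa; apply: (oddZ a); first exact: (subsetP (pcore_sub 2^' G)).
  have := mem_p_elt (pcore_pgroup 2^' G) Aa.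
  by rewrite /p_elt p'natE // dvdn2 negbK.
have aA : abelian 'O_2^'(G) by apply: abelianS sAZ (center_abelian G).
have oH : #|'O_2(G)| = (2 ^ k)%N.
  rewrite (card_Hall (nilpotent_pcore_Hall 2 nilG)) oG partnM ?expn_gt0 //; last lia.
  rewrite part_pnat_id ?pnatX ?pnat_id // part_p'nat ?muln1 //.
  rewrite p'natE // dvdn2 negbK.
  have -> : (2 * t - 1 = (2 * (t - 1)).+1)%N by lia.
  by rewrite /= oddM.
exists gT, gT, 'O_2(G)%G, 'O_2^'(G)%G; split => //.
- split => //; first exact: pcore_pgroup.
  by apply/nc_regularP; apply/(reg_dprod dG aA).
- rewrite (card_Hall (nilpotent_pcore_Hall 2^' nilG)).
  have := partnC 2 (cardG_gt0 G); rewrite -(card_Hall (nilpotent_pcore_Hall 2 nilG)) oH oG.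
  nia.
- exact: isog_dprod dG (setX_dprod _ _) (@isog_setX1 gT gT _) (@isog_set1X gT gT _).
Qed.
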